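(* Let $I\subset S=K[x_1,\dots,x_t]$ be an $\mathfrak m$-primary monomial ideal with $v(I)=\alpha(I)-1$. Then $v(I^{n+1})=v(I)+n\,\alpha(I)$ for all $n\ge 1$.
   Context: $K$ is a field, $S$ is standard graded and $\mathfrak m=\langle x_1,\dots,x_t\rangle$. For a proper graded ideal $J$, the $v$-number is $v(J)=\min\{k\ge 0 : \exists f\in S_k,\ \mathcal P\in\operatorname{Ass}(S/J) \text{ with } (J:f)=\mathcal P\}$. $\alpha(I)=\min\{\deg f : f\in I\setminus\{0\} \text{ homogeneous}\}$. *)

(* Defs.v *)
From HB Require Import structures.
From mathcomp Require Import all_boot all_algebra.
From mathcomp Require Import mpoly.
Set Implicit Arguments. Unset Strict Implicit. Unset Printing Implicit Defensive.
Import GRing.Theory.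
Local Open Scope ring_scope.

Section Ideals.
Variables (K : fieldType) (t : nat).
Local Notation S := {mpoly K[t]}.

Definition sset := S -> Prop.

Definition same_set (A B : sset) : Prop := forall f, A f <-> B f.

Definition is_ideal (I : sset) : Prop :=
  [/\ I 0, (forall a b, I a -> I b -> I (a + b)) & (forall r a, I a -> I (r * a))].

Definition gen (G : sset) : sset := fun f =>
  exists (s : seq (S * S)),
    (forall p, p \in s -> G p.2) /\ f = \sum_(p <- s) p.1 * p.2.

Definition ideal_mul (I J : sset) : sset :=
  gen (fun h => exists a b, [/\ I a, J b & h = a * b]).

Fixpoint ideal_pow (I : sset) (k : nat) : sset :=
  match k with
  | 0 => fun _ => True
  | k'.+1 => ideal_mul (ideal_pow I k') I
  end.

Definition maxm : sset := gen (fun g => exists i : 'I_t, g = 'X_i).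

Definition monomial_ideal (I : sset) : Prop :=
  is_ideal I /\
  exists G : sset, (forall g, G g -> exists m : 'X_{1..t}, g = 'X_[m])
                   /\ same_set I (gen G).

Definition is_prime_ideal (P : sset) : Prop :=
  [/\ is_ideal P, ~ P 1 & forall a b, P (a * b) -> P a \/ P b].

Definition is_primary_ideal (Q : sset) : Prop :=
  [/\ is_ideal Q, ~ Q 1 &
      forall a b, Q (a * b) -> Q a \/ exists n, Q (b ^+ n)].

Definition radical (I : sset) : sset := fun f => exists n, I (f ^+ n).

Definition m_primary (I : sset) : Prop :=
  is_primary_ideal I /\ same_set (radical I) maxm.

Definition colon (J : sset) (f : S) : sset := fun g => J (g * f).

(* associated primes of S/J *)
Definition ass (J : sset) (P : sset) : Prop :=
  is_prime_ideal P /\ exists f : S, same_set (colon J f) P.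

Definition vnum_witness (J : sset) (k : nat) : Prop :=
  exists (f : S) (P : sset), f \is ishomog1 k (@mdeg t) /\ ass J P /\ same_set (colon J f) P.

Definition is_vnumber (J : sset) (k : nat) : Prop :=
  vnum_witness J k /\ forall k', vnum_witness J k' -> (k <= k')%N.

Definition alpha_witness (I : sset) (a : nat) : Prop :=
  exists f : S, [/\ f != 0, f \is ishomog1 a (@mdeg t) & I f].

Definition is_alpha (I : sset) (a : nat) : Prop :=
  alpha_witness I a /\ forall a', alpha_witness I a' -> (a <= a')%N.

End Ideals.

(* Main.v *)
Require Import Defs.
From HB Require Import structures.
From mathcomp Require Import all_boot all_algebra.
From mathcomp Require Import mpoly.
From mathcomp Require Import zify.
Set Implicit Arguments. Unset Strict Implicit. Unset Printing Implicit Defensive.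
Import GRing.Theory.
Local Open Scope ring_scope.

Section H.
Variables (K : fieldType) (t : nat).
Local Notation S := {mpoly K[t]}.
Implicit Types (G I J P : sset K t) (a b h : S).

Lemma genG G g : G g -> gen G g.
Proof. by move=> Gg; exists [:: (1, g)]; split; [move=> p; rewrite inE => /eqP -> | rewrite big_seq1 mul1r]. Qed.

Lemma gen0 G : gen G 0.
Proof. by exists [::]; split => // ; rewrite big_nil. Qed.

Lemma genD G a b : gen G a -> gen G b -> gen G (a + b).
Proof.
move=> [s1 [H1 ->]] [s2 [H2 ->]]; exists (s1 ++ s2); split; last by rewrite big_cat.
by move=> p; rewrite mem_cat => /orP [/H1|/H2].
Qed.

Lemma genM G r a : gen G a -> gen G (r * a).
Proof.
move=> [s [Hs ->]]; exists [seq (r * p.1, p.2) | p <- s]; split.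
  by move=> p /mapP [q qs ->] /=; apply: Hs qs.
by rewrite big_map mulr_sumr; apply: eq_bigr => p _; rewrite mulrA.
Qed.

Lemma gen_ideal G : is_ideal (gen G).
Proof. split; [exact: gen0 | exact: genD | exact: genM]. Qed.

Lemma gen_sub G J f : is_ideal J -> (forall g, G g -> J g) -> gen G f -> J f.
Proof.
move=> [J0 JD JM] HG [s [Hs ->]]; elim: s Hs => [|p s IH] Hs; first by rewrite big_nil.
rewrite big_cons; apply: JD; first by apply: JM; apply: HG; apply: Hs; rewrite inE eqxx.
by apply: IH => q qs; apply: Hs; rewrite inE qs orbT.
Qed.

Lemma pow_ideal I k : is_ideal (ideal_pow I k).
Proof. by case: k => [|k] /=; [split | exact: gen_ideal]. Qed.

Lemma pow_mul I k a b : ideal_pow I k a -> I b -> ideal_pow I k.+1 (a * b).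
Proof. by move=> Ha Ib; apply: genG; exists a, b. Qed.

Lemma pow_mem I k a : I a -> ideal_pow I k (a ^+ k).
Proof. by move=> Ia; elim: k => [|k IH] //=; rewrite exprSr; apply: pow_mul. Qed.

Lemma idealN J a : is_ideal J -> J a -> J (- a).
Proof. by move=> [_ _ JM] Ja; rewrite -mulN1r; apply: JM. Qed.

Lemma prime_pow P x N : is_prime_ideal P -> P (x ^+ N) -> P x.
Proof.
move=> [_ P1 Pp]; elim: N => [|N IH]; first by rewrite expr0.
by rewrite exprS => /Pp [] // /IH.
Qed.

Definition low (p : S) d := forall m : 'X_{1..t}, (mdeg m < d)%N -> p@_m = 0.

Lemma lowM (p q : S) (d e : nat) : low p d -> low q e -> low (p * q) (d + e).
Proof.
move=> hp hq m hm; rewrite mcoeffM big1 // => k /eqP km.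
have : (mdeg k.1 < d)%N || (mdeg k.2 < e)%N.
  by have := mdegD k.1 k.2; rewrite -km; lia.
by case/orP => [/hp -> | /hq ->]; rewrite ?mul0r ?mulr0.
Qed.

Lemma lowD p q d : low p d -> low q d -> low (p + q) d.
Proof. by move=> hp hq m hm; rewrite mcoeffD hp ?hq ?addr0. Qed.

Lemma lowW p d e : (e <= d)%N -> low p d -> low p e.
Proof. by move=> ed hp m hm; apply: hp; lia. Qed.

Lemma low_gen G d f : (forall g, G g -> low g d) -> gen G f -> low f d.
Proof.
move=> HG [s [Hs ->]]; elim: s Hs => [|p s IH] Hs.
  by rewrite big_nil => m _; rewrite mcoeff0.
rewrite big_cons; apply: lowD; last by apply: IH => q qs; apply: Hs; rewrite inE qs orbT.
rewrite -[d]add0n; apply: lowM; first by move=> m.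
by apply: HG; apply: Hs; rewrite inE eqxx.
Qed.

Lemma low_pow I d k f : (forall a, I a -> low a d) -> ideal_pow I k f -> low f (k * d).
Proof.
move=> HI; elim: k f => [|k IH] f /=; first by move=> _ m; rewrite mul0n.
apply: low_gen => g [a [b [Ha Hb ->]]]; rewrite mulSn addnC; apply: lowM; auto.
Qed.

Lemma homog_low p d L : p != 0 -> p \is d.-homog for (@mdeg t) -> low p L -> (L <= d)%N.
Proof.
move=> p0 hp hl; case E: (msupp p) => [|m s]; first by move/eqP: E; rewrite msupp_eq0 (negbTE p0).
have ms : m \in msupp p by rewrite E inE eqxx.
have := dhomog_mf hp ms => /= dm.
have nz : p@_m != 0 by rewrite mcoeff_eq0 negbK.
rewrite leqNgt; apply/negP => hd; move: nz; rewrite hl ?eqxx //; lia.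
Qed.

Lemma mpolyX_neq0 m : ('X_[m] : S) != 0.
Proof. by rewrite -msupp_eq0 msuppX. Qed.

Lemma lowX m : low ('X_[m] : S) (mdeg m).
Proof. by move=> k hk; rewrite mcoeffX; case: eqP => // E; move: hk; rewrite E ltnn. Qed.

Lemma const_split h : gen (fun g => exists i : 'I_t, g = 'X_i) (h - (h@_0%MM)%:MP).
Proof.
set h' := h - _.
have h0 : h'@_0%MM = 0 by rewrite mcoeffB mcoeffC eqxx mulr1 subrr.
rewrite (mpolyE h'); have : forall m, m \in msupp h' -> m != 0%MM.
  by move=> m; apply: contraTneq => ->; rewrite -mcoeff_eq0 h0.
elim: (msupp h') => [|m s IH] Hs; first by rewrite big_nil; exact: gen0.
rewrite big_cons; apply: genD; last by apply: IH => q qs; apply: Hs; rewrite inE qs orbT.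
have mnz : m != 0%MM by apply: Hs; rewrite inE eqxx.
have [i mi] : exists i, (0 < m i)%N.
  case: (pickP (fun i => (0 < m i)%N)) => [i hi|H]; first by exists i.
  case/eqP: mnz; apply/mnmP => i; rewrite mnm0E.
  by move: (H i) => /=; rewrite lt0n => /negbFE/eqP.
have le : (U_(i) <= m)%MM.
  apply/mnm_lepP => j; rewrite mnm1E; case: eqP => [<-|] //=.
rewrite -[X in 'X_[X]](submK le) mpolyXD scalerAl.
by apply: genM; apply: genG; exists i.
Qed.

Lemma homog0_const (p : S) : p \is 0.-homog for (@mdeg t) -> p = (p@_0%MM)%:MP.
Proof.
move=> hp; apply/mpolyP => m; rewrite mcoeffC; case: (m =P 0%MM) => [->|/eqP mn].
  by rewrite mulr1.
rewrite mulr0; apply/eqP; rewrite mcoeff_eq0; apply: contra mn => ms.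
by have /= /eqP := dhomog_mf hp ms; rewrite mdeg_eq0.
Qed.

Lemma colon_ideal J f : is_ideal J -> forall a, J a -> colon J f a.
Proof. by move=> [_ _ JM] a Ja; rewrite /colon mulrC; apply: JM. Qed.

Lemma colon_nz J f P : is_ideal J -> is_prime_ideal P -> same_set (colon J f) P -> f != 0.
Proof.
move=> [J0 _ _] [_ P1 _] E; apply/eqP => f0; apply: P1; apply/E.
by rewrite /colon f0 mulr0.
Qed.

End H.
Unset Implicit Arguments.


Theorem proposition4p10 (K : fieldType) (t : nat) (I : sset K t)
  (vI aI : nat) :
  monomial_ideal I -> m_primary I ->
  is_vnumber I vI -> is_alpha I aI ->
  vI = (aI - 1)%N ->
  forall n : nat, (1 <= n)%N ->
    is_vnumber (ideal_pow I n.+1) (vI + n * aI)%N.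
Proof.
move=> [Iid [G [HG EG]]] [[_ I1 _] Erad] [Wv vmin] [[g [g0 gh Ig]] amin] hv n n1.
have lowI : forall a, I a -> low a aI.
  move=> a /EG; apply: low_gen => x Gx; have [m xm] := HG x Gx; rewrite xm.
  apply: (lowW _ (@lowX K t m)); apply: amin; exists 'X_[m]; split.
  - exact: (@mpolyX_neq0 K t).
  - by rewrite dhomogX.
  - by apply/EG; rewrite -xm; apply: genG.
have lowP : forall k f, ideal_pow I k f -> low f (k * aI)%N.
  by move=> k f; apply: low_pow.
have [i0 _] : exists i : 'I_t, True.
  have : maxm g by apply/Erad; exists 1%N; rewrite expr1.
  case=> [[|p s] [Hs E]]; first by move: g0; rewrite E big_nil eqxx.
  by have [i _] := Hs p (mem_head _ _); exists i.
have varsrad : forall i : 'I_t, exists N, I ('X_i ^+ N).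
  by move=> i; apply/Erad; apply: genG; exists i.
have Jid := pow_ideal I n.+1.
have a1 : (0 < aI)%N.
  rewrite lt0n; apply/eqP => a0; rewrite a0 in gh.
  have gc := homog0_const gh.
  have gc0 : g@_0%MM != 0 by apply: contra g0 => /eqP c0; rewrite gc c0 mpolyC0.
  apply: I1; have -> : (1 : {mpoly K[t]}) = (g@_0%MM)^-1%:MP * g.
    by rewrite {2}gc -mpolyCM mulVf ?mpolyC1.
  by case: Iid => _ _ M; apply: M.
split.
- case: Wv => f0 [P [hf0 [[Pp _] EP]]].
  have f0nz := colon_nz Iid Pp EP.
  pose F := f0 * g ^+ n.
  have hF : F \is (vI + n * aI)%N.-homog for (@mdeg t).
    by rewrite /F mulnC; apply: dhomogM => //; apply: dhomogMn.
  have E : same_set (colon (ideal_pow I n.+1) F) P.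
    move=> h; split.
    + move=> Hh.
      set c := h@_0%MM.
      have hs := const_split h.
      have Ph' : P (h - c%:MP).
        apply: (gen_sub _ _ hs); first by case: Pp.
        move=> x [i ->]; have [N HN] := varsrad i.
        by apply: (prime_pow (N := N)) => //; apply/EP; apply: colon_ideal.
      have H1 : ideal_pow I n.+1 ((h - c%:MP) * F).
        have Ih' : I ((h - c%:MP) * f0) by apply/EP.
        by rewrite /F mulrA mulrC; apply: pow_mul => //; apply: pow_mem.
      have H2 : ideal_pow I n.+1 (c%:MP * F).
        have -> : c%:MP * F = h * F - (h - c%:MP) * F.
          by rewrite mulrBl opprB addrC subrK.
        case: (Jid) => _ D _; apply: D => //; exact: idealN.
      case: (c =P 0) => [c0|/eqP cn0].
        by move: Ph'; rewrite c0 mpolyC0 subr0.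
      exfalso.
      have HF : ideal_pow I n.+1 F.
        have -> : F = (c^-1)%:MP * (c%:MP * F).
          by rewrite mulrA -mpolyCM mulVf // mpolyC1 mul1r.
        by case: (Jid) => _ _ M; apply: M.
      have Fnz : F != 0 by rewrite mulf_neq0 // expf_neq0.
      have := homog_low Fnz hF (lowP _ _ HF).
      rewrite hv; lia.
    + move=> Ph; have Ih : I (h * f0) by apply/EP.
      by rewrite /colon /F mulrA mulrC; apply: pow_mul => //; apply: pow_mem.
  exists F, P; split; first exact: hF.
  split; last exact: E.
  by split => //; exists F.
- move=> k [f [P' [hf [[Pp' _] E']]]].
  have fnz := colon_nz Jid Pp' E'.
  have [N HN] := varsrad i0.
  have PX : P' 'X_i0.
    apply: (prime_pow (N := (N * n.+1)%N)) Pp' _; apply/E'; apply: colon_ideal => //.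
    by rewrite exprM; apply: pow_mem.
  have J1 : ideal_pow I n.+1 ('X_i0 * f) by apply/E'.
  have nz : 'X_i0 * f != 0 by rewrite mulf_neq0 // mpolyX_neq0.
  have hX : ('X_i0 * f) \is (1 + k)%N.-homog for (@mdeg t).
    by apply: dhomogM => //; rewrite dhomogX; apply/eqP; apply: mdeg1.
  have := homog_low nz hX (lowP _ _ J1).
  rewrite hv; lia.
Qed.
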